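(* For every integer $n\geq1$, let $f_n(x)=x^n(x-2)-2$ and $g_n(x)=x^n(x-2)+2$. Then $f_n$ and $g_n$ are irreducible in $\mathbb Q[x]$, separable, do not have $0$ as a root, and have no common root. *)

(* Defs.v *)
From mathcomp Require Import all_boot all_algebra all_field.
Set Implicit Arguments.
Unset Strict Implicit.
Unset Printing Implicit Defensive.
Import GRing.Theory Num.Theory.
Local Open Scope ring_scope.

Definition fpoly (n : nat) : {poly rat} := 'X^n * ('X - 2%:P) - 2%:P.
Definition gpoly (n : nat) : {poly rat} := 'X^n * ('X - 2%:P) + 2%:P.

(* Main.v *)
Require Import Defs.
From mathcomp Require Import all_boot all_algebra all_field.
From mathcomp Require Import zify.
Import GRing.Theory Num.Theory.
Local Open Scope ring_scope.

Lemma sep_irr (p : {poly rat}) : irreducible_poly p -> separable_poly p.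
Proof.
move=> [p1 pirr].
rewrite unlock coprimep_def.
have [//|d1] := eqVneq (size (gcdp p p^`())) 1%N.
have := pirr _ d1 (dvdp_gcdl _ _) => /eqp_dvdl Hd.
have : p %| p^`() by rewrite -Hd dvdp_gcdr.
have dn0 : p^`() != 0.
  have pn0 : p != 0 by rewrite -size_poly_gt0 ltnW.
  have [k hk] : exists k, size p = k.+2.
    by exists (size p).-2; move: p1; case: (size p) => [|[|m]].
  apply/eqP => /(congr1 (fun q : {poly rat} => q`_k)).
  rewrite coef_deriv coef0 => /eqP.
  rewrite mulrn_eq0 /=.
  have := pn0; rewrite -lead_coef_eq0 /lead_coef hk /= => /negPf ->.
  done.
move/(dvdp_leq dn0).
have pn0 : p != 0 by rewrite -size_poly_gt0 ltnW.
by rewrite leqNgt lt_size_deriv.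
Qed.

Definition hz (n : nat) (c : int) : {poly int} := 'X^n * ('X - 2%:P) + c%:P.

Lemma coef_hz n c i : (hz n c)`_i =
  (if i == n.+1 then 1 else if i == n then -2 else 0) + (if i == 0%N then c else 0).
Proof.
rewrite /hz coefD coefXnM coefC coefB coefX coefC.
case: (ltnP i n) => h.
  by rewrite (ltn_eqF h) (ltn_eqF (ltn_trans h (ltnSn n))).
rewrite -(subnKC h); move: (i - n)%N => k.
rewrite addKn.
case: k => [|[|k]] /=.
all: try rewrite addn0.
all: try rewrite addn1.
- by rewrite eqxx (ltn_eqF (ltnSn n)) sub0r.
- by rewrite eqxx subr0.
- have e1 : (n + k.+2 == n.+1) = false by apply/negbTE/eqP; lia.
  have e2 : (n + k.+2 == n) = false by apply/negbTE/eqP; lia.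
  by rewrite e1 e2 subr0 !add0r.
Qed.

Lemma size_hz n c : size (hz n c) = n.+2.
Proof.
have hs : size ('X^n * ('X - 2%:P) : {poly int}) = n.+2.
  by rewrite size_monicM ?monicXn ?polyXsubC_eq0 // size_polyXn size_XsubC addn2.
rewrite /hz size_addl hs //.
exact: (leq_ltn_trans (size_polyC_leq1 c)).
Qed.

Lemma irr_hz n c : (1 <= n)%N -> ~~ (4 %| c)%Z -> (2 %| c)%Z -> irreducible_poly (hz n c).
Proof.
move=> hn c4 c2.
apply: (@eisenstein_crit 2) => //; rewrite ?size_hz //.
- by rewrite /lead_coef size_hz coef_hz eqxx.
- rewrite coef_hz /= (ltn_eqF hn) add0r.
  by [].
- move=> i; rewrite /= ltnS coef_hz => hi.
  rewrite (ltn_eqF (hi : i < n.+1)%N); case: eqP => _; case: eqP => _ //; rewrite ?addr0 ?add0r //.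
  by rewrite rpredD // rpredN.
Qed.

Lemma map_hz n c : map_poly intr (hz n c) = 'X^n * ('X - 2%:P) + (c%:~R)%:P :> {poly rat}.
Proof. by rewrite /hz rmorphD rmorphM /= map_polyXn rmorphB /= map_polyX !map_polyC. Qed.

Lemma f_hz n : fpoly n = map_poly intr (hz n (-2)).
Proof. by rewrite map_hz /fpoly polyCN. Qed.
Lemma g_hz n : gpoly n = map_poly intr (hz n 2).
Proof. by rewrite map_hz /gpoly. Qed.

Theorem lemma8 (n : nat) (hn : (1 <= n)%N) :
  (irreducible_poly (fpoly n) /\ irreducible_poly (gpoly n)) /\
  (separable_poly (fpoly n) /\ separable_poly (gpoly n)) /\
  (~~ root (fpoly n) 0 /\ ~~ root (gpoly n) 0) /\
  (forall z : algC,
     ~~ (root (map_poly ratr (fpoly n)) z && root (map_poly ratr (gpoly n)) z)).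
Proof.
have If : irreducible_poly (fpoly n) by rewrite f_hz; apply/irreducible_rat_int/irr_hz.
have Ig : irreducible_poly (gpoly n) by rewrite g_hz; apply/irreducible_rat_int/irr_hz.
split; first by [].
split; first by split; apply: sep_irr.
split.
  rewrite /root /fpoly /gpoly !hornerE expr0n eqn0Ngt hn /=.
  by [].
move=> z; apply/negP; rewrite /root => /andP[/eqP hf /eqP hg].
have : (map_poly ratr (gpoly n - fpoly n)).[z] = 0 :> algC.
  by rewrite rmorphB hornerD hornerN hf hg subrr.
have -> : gpoly n - fpoly n = 4%:P.
  rewrite /gpoly /fpoly opprB addrC addrA addrNK -polyCD.
  by [].
rewrite map_polyC hornerC /=.
by move/eqP; rewrite (rmorph_nat _ 4) pnatr_eq0.
Qed.
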